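(* Let $G$ be a group regarded as a large scale group whose bornology consists of all finite subsets of $G$. If $G$ has exactly two ends, then $G$ is finitely generated, and consequently $G$ contains an infinite cyclic subgroup of finite index.
   Context: For a group $G$ with the bornology of all finite subsets, the uniformly bounded covers are the covers refining $\{gF\}_{g\in G}$ for some finite $F\subseteq G$, and the bounded sets are the finite sets. For $A\subseteq G$ and a cover $\mathcal U$, $st(A,\mathcal U)$ is the union of members of $\mathcal U$ meeting $A$; $A$ is coarsely clopen if $st(A,\mathcal U)\cap st(G\setminus A,\mathcal U)$ is finite for every uniformly bounded $\mathcal U$. An end of $G$ is a family of infinite coarsely clopen subsets of $G$ maximal with respect to the property that all finite intersections of its members are infinite. *)

(* Defs.v *)
From HB Require Import structures.
From mathcomp Require Import all_boot all_order all_algebra.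
From mathcomp Require Import boolp classical_sets cardinality.
Set Implicit Arguments. Unset Strict Implicit. Unset Printing Implicit Defensive.
Local Open Scope classical_set_scope.

Record group := Group {
  carrier :> Type;
  gmul : carrier -> carrier -> carrier;
  gone : carrier;
  ginv : carrier -> carrier;
  gmulA : forall x y z, gmul x (gmul y z) = gmul (gmul x y) z;
  gmul1g : forall x, gmul gone x = x;
  gmulg1 : forall x, gmul x gone = x;
  gmulVg : forall x, gmul (ginv x) x = gone;
  gmulgV : forall x, gmul x (ginv x) = gone
}.

Section LargeScale.
Variable G : group.

Definition ltrans (g : G) (F : set G) : set G := [set gmul g f | f in F].

Definition is_cover (U : set (set G)) : Prop := \bigcup_(V in U) V = [set: G].

Definition unif_bounded (U : set (set G)) : Prop :=
  is_cover U /\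
  exists F : set G, finite_set F /\ forall V, U V -> exists g : G, V `<=` ltrans g F.

Definition star (A : set G) (U : set (set G)) : set G :=
  \bigcup_(V in [set V | U V /\ V `&` A !=set0]) V.

Definition coarsely_clopen (A : set G) : Prop :=
  forall U, unif_bounded U -> finite_set (star A U `&` star (~` A) U).

Definition end_candidate (E : set (set G)) : Prop :=
  (forall A, E A -> infinite_set A /\ coarsely_clopen A) /\
  (forall F : set (set G), F `<=` E -> finite_set F -> F !=set0 ->
     infinite_set (\bigcap_(A in F) A)).

Definition is_end (E : set (set G)) : Prop :=
  end_candidate E /\ forall E', end_candidate E' -> E `<=` E' -> E' = E.

Definition has_exactly_two_ends : Prop :=
  exists E1 E2, [/\ is_end E1, is_end E2, E1 <> E2 &
                   forall E, is_end E -> E = E1 \/ E = E2].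

Inductive generated (S : set G) : G -> Prop :=
  | gen_base x : S x -> generated S x
  | gen_one : generated S (gone G)
  | gen_mul x y : generated S x -> generated S y -> generated S (gmul x y)
  | gen_inv x : generated S x -> generated S (ginv x).

Definition finitely_generated : Prop :=
  exists S : set G, finite_set S /\ forall x, generated S x.

Definition zpow (g : G) (n : int) : G :=
  match n with
  | Posz k => iter k (gmul g) (gone G)
  | Negz k => iter k.+1 (gmul (ginv g)) (gone G)
  end.

Definition cyclic_subgroup (g : G) : set G := [set zpow g n | n in [set: int]].

Definition has_infinite_cyclic_finite_index : Prop :=
  exists g : G, infinite_set (cyclic_subgroup g) /\
    exists T : set G, finite_set T /\
      forall x : G, exists2 t, T t & exists2 y, cyclic_subgroup g y & x = gmul t y.

End LargeScale.

(* Main.v *)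
Require Import Defs.
From mathcomp Require Import all_boot all_order all_algebra finmap zify.
From mathcomp Require Import boolp classical_sets cardinality.
Set Implicit Arguments. Unset Strict Implicit. Unset Printing Implicit Defensive.
Local Open Scope classical_set_scope.

Section Basics.
Variable G : group.
Local Notation "x \* y" := (@gmul G x y) (at level 40, left associativity).
Local Notation "x ^-" := (@ginv G x) (at level 3).
Local Notation "\1" := (gone G).

Lemma mulgA' (x y z : G) : x \* (y \* z) = x \* y \* z. Proof. exact: gmulA. Qed.
Lemma mul1g' (x : G) : \1 \* x = x. Proof. exact: gmul1g. Qed.
Lemma mulg1' (x : G) : x \* \1 = x. Proof. exact: gmulg1. Qed.
Lemma mulVg' (x : G) : x^- \* x = \1. Proof. exact: gmulVg. Qed.
Lemma mulgV' (x : G) : x \* x^- = \1. Proof. exact: gmulgV. Qed.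
Lemma mulKg (x y : G) : x^- \* (x \* y) = y.
Proof. by rewrite mulgA' mulVg' mul1g'. Qed.
Lemma mulKVg (x y : G) : x \* (x^- \* y) = y.
Proof. by rewrite mulgA' mulgV' mul1g'. Qed.
Lemma mulgK (x y : G) : y \* x \* x^- = y.
Proof. by rewrite -mulgA' mulgV' mulg1'. Qed.
Lemma mulgKV (x y : G) : y \* x^- \* x = y.
Proof. by rewrite -mulgA' mulVg' mulg1'. Qed.
Lemma mulg_injl (x y z : G) : x \* y = x \* z -> y = z.
Proof. by move=> e; rewrite -(mulKg x y) e mulKg. Qed.
Lemma mulg_injr (x y z : G) : y \* x = z \* x -> y = z.
Proof. by move=> e; rewrite -(mulgK x y) e mulgK. Qed.
Lemma invgK (x : G) : x^- ^- = x.
Proof. by apply: (@mulg_injl (x^-)); rewrite mulgV' mulVg'. Qed.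
Lemma invgM (x y : G) : (x \* y)^- = y^- \* x^-.
Proof.
apply: (@mulg_injl (x \* y)); rewrite mulgV' -mulgA' (mulgA' y) mulgV' mul1g'.
by rewrite mulgV'.
Qed.
Lemma invg1 : (\1 : G)^- = \1.
Proof. by rewrite -{2}(mulVg' \1) mulg1'. Qed.

End Basics.

Section Clop.
Variable G : group.
Local Notation "x \* y" := (@gmul G x y) (at level 40, left associativity).
Local Notation "x ^-" := (@ginv G x) (at level 3).
Local Notation "\1" := (gone G).
Implicit Types A B C : set G.

Definition bd (t : G) (A : set G) : set G := [set x | A x /\ ~ A (x \* t)].
Definition clop (A : set G) := forall t, finite_set (bd t A).
Definition aeq (A B : set G) := finite_set (A `\` B) /\ finite_set (B `\` A).
Definition lt (g : G) (A : set G) : set G := [set x | A (g^- \* x)].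
Definition rmul (A : set G) (s : G) : set G := [set x | A (x \* s)].

Lemma fin_img (f : G -> G) (A : set G) : finite_set A -> finite_set (f @` A).
Proof. exact: finite_image. Qed.

Lemma finU (A B : set G) : finite_set A -> finite_set B -> finite_set (A `|` B).
Proof. by move=> fA fB; rewrite finite_setU. Qed.

Lemma finS (A B : set G) : A `<=` B -> finite_set B -> finite_set A.
Proof. exact: sub_finite_set. Qed.

Lemma aeq_refl A : aeq A A.
Proof. by split; apply: (finS _ (@finite_set0 G)) => x [] . Qed.
Lemma aeq_sym A B : aeq A B -> aeq B A.
Proof. by case. Qed.
Lemma aeq_trans A B C : aeq A B -> aeq B C -> aeq A C.
Proof.
move=> [f1 f2] [f3 f4]; split.
  apply: (finS _ (finU f1 f3)) => x [Ax nCx].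
  by have [Bx|nBx] := pselect (B x); [right|left].
apply: (finS _ (finU f4 f2)) => x [Cx nAx].
by have [Bx|nBx] := pselect (B x); [right|left].
Qed.
Lemma aeqC A B : aeq A B -> aeq (~` A) (~` B).
Proof.
move=> [f1 f2]; split.
  by apply: (finS _ f2) => x [/= nAx nnBx]; split=> //; apply: contra_notP nnBx.
by apply: (finS _ f1) => x [/= nBx nnAx]; split=> //; apply: contra_notP nnAx.
Qed.

Lemma ltK g A : lt g^- (lt g A) = A.
Proof.
by apply/seteqP; split=> x; rewrite /lt /= invgK mulKg.
Qed.
Lemma ltM g h A : lt (g \* h) A = lt g (lt h A).
Proof. by apply/seteqP; split=> x; rewrite /lt /= invgM mulgA'. Qed.
Lemma lt1 A : lt \1 A = A.
Proof. by apply/seteqP; split=> x; rewrite /lt /= invg1 mul1g'. Qed.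
Lemma ltC g A : lt g (~` A) = ~` lt g A.
Proof. by []. Qed.
Lemma ltE g A x : lt g A x <-> A (g^- \* x).
Proof. by []. Qed.
Lemma lt_img g A : lt g A = (fun x => g \* x) @` A.
Proof.
apply/seteqP; split=> x; rewrite /lt /=.
  by move=> Ax; exists (g^- \* x) => //; rewrite mulKVg.
by move=> [y Ay <-]; rewrite mulKg.
Qed.
Lemma lt_aeq g A B : aeq A B -> aeq (lt g A) (lt g B).
Proof.
move=> [f1 f2]; split.
  by apply: (finS _ (fin_img (fun x => g \* x) f1)) => x [/= Ax nBx];
     exists (g^- \* x) => //; rewrite mulKVg.
by apply: (finS _ (fin_img (fun x => g \* x) f2)) => x [/= Ax nBx];
   exists (g^- \* x) => //; rewrite mulKVg.
Qed.
Lemma lt_fin g A : finite_set A -> finite_set (lt g A).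
Proof. by rewrite lt_img; apply: fin_img. Qed.
Lemma lt_inf g A : ~ finite_set A -> ~ finite_set (lt g A).
Proof. by move=> iA /(lt_fin g^-); rewrite ltK. Qed.

Lemma clopC A : clop A -> clop (~` A).
Proof.
move=> cA t; apply: (finS _ (fin_img (fun y => y \* t^-) (cA t^-))).
move=> x [/= nAx nnAxt]; exists (x \* t); last by rewrite mulgK.
by split; [apply: contra_notP nnAxt|rewrite mulgK].
Qed.
Lemma clopI A B : clop A -> clop B -> clop (A `&` B).
Proof.
move=> cA cB t; apply: (finS _ (finU (cA t) (cB t))).
move=> x [[Ax Bx] /not_andP [nA|nB]]; [left|right]; by split.
Qed.
Lemma clopU A B : clop A -> clop B -> clop (A `|` B).
Proof.
move=> cA cB t; apply: (finS _ (finU (cA t) (cB t))).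
move=> x [[Ax|Bx] /not_orP [nA nB]]; [left|right]; by split.
Qed.
Lemma clopD A B : clop A -> clop B -> clop (A `\` B).
Proof. by move=> cA cB; apply: clopI => //; apply: clopC. Qed.
Lemma clop_aeq A B : aeq A B -> clop A -> clop B.
Proof.
move=> [f1 f2] cA t.
apply: (finS _ (finU (finU (cA t) f2) (fin_img (fun y => y \* t^-) f1))).
move=> x [Bx nBxt].
have [Ax|nAx] := pselect (A x); last by left; right.
have [Axt|nAxt] := pselect (A (x \* t)); last by left; left.
by right; exists (x \* t); [|rewrite mulgK].
Qed.
Lemma clop_lt g A : clop A -> clop (lt g A).
Proof.
move=> cA t; apply: (finS _ (fin_img (fun y => g \* y) (cA t))).
move=> x [/= Ax nAxt]; exists (g^- \* x); last by rewrite mulKVg.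
by split=> //; rewrite -mulgA'.
Qed.
Lemma rmul_aeq A s : clop A -> aeq (rmul A s) A.
Proof.
move=> cA; split.
  apply: (finS _ (clopC cA s)) => x [/= Axs nAx].
  by split=> //; apply; exact: Axs.
by apply: (finS _ (cA s)) => x [/= Ax nAxs].
Qed.

Lemma aeq_inf A B : aeq A B -> ~ finite_set A -> ~ finite_set B.
Proof.
move=> [f1 f2] iA fB; apply: iA; apply: (finS _ (finU f1 fB)).
by move=> x Ax; have [Bx|nBx] := pselect (B x); [right|left].
Qed.
Lemma aeq_fin A B : aeq A B -> finite_set A -> finite_set B.
Proof.
move=> [f1 f2] fA; apply: (finS _ (finU f2 fA)).
by move=> x Bx; have [Ax|nAx] := pselect (A x); [right|left].
Qed.

Lemma inf_diff A B : ~ finite_set A -> finite_set B -> ~ finite_set (A `\` B).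
Proof.
move=> iA fB fAB; apply: iA; apply: (finS _ (finU fAB fB)).
by move=> x Ax; have [Bx|nBx] := pselect (B x); [right|left].
Qed.
Lemma inf_ex A : ~ finite_set A -> exists x, A x.
Proof.
move=> iA; apply: contra_notP iA => nex; apply: (finS _ (@finite_set0 G)).
by move=> x Ax; apply: nex; exists x.
Qed.

Lemma cc_clop A : coarsely_clopen A -> clop A.
Proof.
move=> cc t; pose F := [set \1; t].
pose U := [set V | exists g, V = ltrans g F].
have ubU : unif_bounded U.
  split.
    apply/seteqP; split=> // x _; exists (ltrans x F); first by exists x.
    by exists \1; [left|rewrite mulg1'].
  exists F; split; first exact: finite_set2.
  by move=> V [g ->]; exists g.
apply: (finS _ (cc U ubU)) => x [Ax nAxt]; split.
  exists (ltrans x F); last by exists \1; [left|rewrite mulg1'].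
  by split; [exists x|exists x; split=> //; exists \1; [left|rewrite mulg1']].
exists (ltrans x F); last by exists \1; [left|rewrite mulg1'].
by split; [exists x|exists (x \* t); split=> //; exists t; [right|]].
Qed.

Lemma clop_cc A : clop A -> coarsely_clopen A.
Proof.
move=> cA U [cov [F [fF sub]]].
pose F' := [set (f1^- \* f2) | f1 in F & f2 in F].
have fF' : finite_set F' by apply: finite_image2.
pose B := \bigcup_(u in F') (bd u A `|` (fun y => y \* u) @` bd u A).
have fB : finite_set B.
  by apply: bigcup_finite => // u _; apply: finU => //; apply: fin_img.
apply: (finS _ fB) => y [[V1 [UV1 [a [V1a Aa]]] V1y] [V2 [UV2 [b [V2b nAb]]] V2y]].
have [g1 s1] := sub _ UV1; have [g2 s2] := sub _ UV2.
have [f1 Ff1 ea] := s1 _ V1a; have [f2 Ff2 ey] := s1 _ V1y.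
have [f3 Ff3 ey'] := s2 _ V2y; have [f4 Ff4 eb] := s2 _ V2b.
have [Ay|nAy] := pselect (A y).
  exists (f3^- \* f4); first by exists f3 => //; exists f4.
  left; split=> //; rewrite -ey' -mulgA' mulKVg eb //.
exists (f1^- \* f2); first by exists f1 => //; exists f2.
right; exists a; last by rewrite -ea -mulgA' mulKVg ey.
by split=> //; rewrite -ea -mulgA' mulKVg ey.
Qed.

End Clop.

Section Ends.
Variable G : group.
Local Notation "x \* y" := (@gmul G x y) (at level 40, left associativity).
Local Notation "x ^-" := (@ginv G x) (at level 3).
Local Notation "\1" := (gone G).
Implicit Types A B C Y : set G.

Lemma chain_fin (F : set (set (set G))) (tot : total_on F subset)
  (s : seq {classic (set G)}) :
  (forall x, x \in s -> exists2 E, F E & E x) ->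
  s = [::] \/ exists2 E, F E & forall x, x \in s -> E x.
Proof.
elim: s => [|a s IH] h; first by left.
right; have [Ea FEa Eaa] := h a (mem_head _ _).
have [->|[Es FEs Ess]] := IH (fun x xs => h x ltac:(by rewrite inE xs orbT)).
  by exists Ea => // x; rewrite inE => /eqP ->.
have [sub|sub] := tot _ _ FEa FEs.
  exists Es => // x; rewrite inE => /orP [/eqP ->|]; [exact: sub|exact: Ess].
exists Ea => // x; rewrite inE => /orP [/eqP ->|xs] //; exact/sub/Ess.
Qed.

Lemma cand_bigcup (F : set (set (set G))) : total_on F subset ->
  (forall E, F E -> end_candidate E) -> end_candidate (\bigcup_(E in F) E).
Proof.
move=> tot cand; split.
  by move=> A [E FE EA]; apply: (cand E FE).1.
move=> Fam sub fFam neFam.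
have [s es] := (@finite_seqP {classic (set G)} Fam).1 fFam.
have := chain_fin tot (s := s).
case.
- move=> x xs; have Fx : Fam x by rewrite es.
  by have [E FE Ex] := sub _ Fx; exists E.
- by move=> s0; case: neFam => x; rewrite es s0.
move=> [E FE sE]; apply: (cand E FE).2 => //.
by move=> x; rewrite es /= => /sE.
Qed.

Lemma end_exists Y : clop Y -> ~ finite_set Y -> exists E, is_end E /\ E Y.
Proof.
move=> cY iY.
pose P := [set E : set (set G) | end_candidate E /\ (E = set0 \/ E Y)].
have candY : end_candidate [set Y].
  split; first by move=> A ->; split=> //; apply: clop_cc.
  move=> Fam sub _ [x Fx].
  have -> : Fam = [set Y].
    apply/seteqP; split=> [z /sub //|z ->]; by rewrite -(sub _ Fx).
  by rewrite bigcap_set1.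
have prem : forall F, F `<=` P -> total_on F subset -> P (\bigcup_(X in F) X).
  move=> F sub tot; split.
    by apply: cand_bigcup => // E /sub [].
  have [[E FE EY]|nex] := pselect (exists2 E, F E & E Y).
    by right; exists E.
  left; apply/seteqP; split=> // A [E FE EA].
  have [_ [E0|EY]] := sub _ FE; first by rewrite E0 in EA.
  by case: nex; exists E.
have [M [[cM hM] maxM]] := Zorn_bigcup prem.
have MY : M Y.
  case: hM => // M0; exfalso; apply: (maxM [set Y]); last by split=> //; right.
  rewrite M0; split; first by move=> ? [].
  by move=> h; exact: (h Y erefl).
exists M; split => //; split => // E' cE' ME'.
apply/seteqP; split => //.
apply: contrapT => nsub; apply: (maxM E'); first by split.
by split => //; right; apply: ME'.
Qed.

End Ends.

Section HypS.
Variable G : group.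
Local Notation "x \* y" := (@gmul G x y) (at level 40, left associativity).
Local Notation "x ^-" := (@ginv G x) (at level 3).
Local Notation "\1" := (gone G).
Implicit Types A B C Y : set G.

Definition P4cond A := forall C, clop C ->
  (finite_set (C `&` A) \/ finite_set (A `\` C)) /\
  (finite_set (C `&` ~` A) \/ finite_set (~` A `\` C)).
Definition Hyp A := [/\ clop A, ~ finite_set A, ~ finite_set (~` A) & P4cond A].

Lemma bigcap2 (Y1 Y2 : set G) : \bigcap_(X in [set Y1; Y2]) X = Y1 `&` Y2.
Proof.
apply/seteqP; split=> x.
  by move=> h; split; apply: h; [left|right].
by move=> [h1 h2] X [->|->].
Qed.

Lemma end_distinct E1 E2 Y1 Y2 : is_end E1 -> is_end E2 -> E1 Y1 -> E2 Y2 ->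
  finite_set (Y1 `&` Y2) -> E1 <> E2.
Proof.
move=> [[_ fip] _] _ E1Y1 E2Y2 fY E12; subst E2.
have h := fip [set Y1; Y2]; rewrite bigcap2 in h; apply: h fY.
- by move=> X [->|->].
- exact: finite_set2.
- by exists Y1; left.
Qed.

Lemma three_ends Y1 Y2 Y3 : has_exactly_two_ends G ->
  clop Y1 -> clop Y2 -> clop Y3 ->
  ~ finite_set Y1 -> ~ finite_set Y2 -> ~ finite_set Y3 ->
  finite_set (Y1 `&` Y2) -> finite_set (Y1 `&` Y3) -> finite_set (Y2 `&` Y3) ->
  False.
Proof.
move=> [E1 [E2 [e1 e2 ne all]]] c1 c2 c3 i1 i2 i3 f12 f13 f23.
have [F1 [eF1 F1Y]] := end_exists c1 i1.
have [F2 [eF2 F2Y]] := end_exists c2 i2.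
have [F3 [eF3 F3Y]] := end_exists c3 i3.
have d12 := end_distinct eF1 eF2 F1Y F2Y f12.
have d13 := end_distinct eF1 eF3 F1Y F3Y f13.
have d23 := end_distinct eF2 eF3 F2Y F3Y f23.
by case: (all _ eF1) => ?; case: (all _ eF2) => ?; case: (all _ eF3) => ?; congruence.
Qed.

Lemma two_ends_Hyp : has_exactly_two_ends G -> exists A, Hyp A.
Proof.
move=> two; have [E1 [E2 [e1 e2 ne all]]] := two.
have [Y [E1Y nE2Y]] : exists Y, E1 Y /\ ~ E2 Y.
  apply: contrapT => h; apply: ne; symmetry; apply: (e1.2 E2 e2.1).
  by move=> Y E1Y; apply: contrapT => nY; apply: h; exists Y.
have [iY cY] := e1.1.1 Y E1Y.
have cY' := cc_clop cY.
have ncand : ~ end_candidate (E2 `|` [set Y]).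
  move=> cand; apply: nE2Y; rewrite -(e2.2 _ cand); last by move=> X; left.
  by right.
have [Fam [sub fFam neFam fcap]] : exists Fam, [/\ Fam `<=` E2 `|` [set Y],
    finite_set Fam, Fam !=set0 & finite_set (\bigcap_(X in Fam) X)].
  apply: contrapT => h; apply: ncand; split.
    by move=> X [/(e2.1.1 X)//|->].
  by move=> Fam sub fFam neFam fcap; apply: h; exists Fam; split => //.
have FamY : Fam Y.
  apply: contrapT => nFY; have := e2.1.2 Fam _ fFam neFam; apply => //.
  by move=> X FX; case: (sub _ FX) => // eX; case: nFY; rewrite -eX.
pose Fam' := Fam `\` [set Y].
have [neF'|eF'] := pselect (Fam' !=set0); last first.
  exfalso; apply: iY; apply: (finS _ fcap) => x Yx X FX.
  have [->//|nXY] := pselect (X = Y).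
  by case: eF'; exists X.
have iZ : ~ finite_set (\bigcap_(X in Fam') X).
  apply: e2.1.2 => //; last exact: finite_setD.
  by move=> X [FX nXY]; case: (sub _ FX).
have fYZ : finite_set (Y `&` \bigcap_(X in Fam') X).
  apply: (finS _ fcap) => x [Yx Zx] X FX.
  have [->//|nXY] := pselect (X = Y).
  by apply: Zx; split.
have inY : ~ finite_set (~` Y).
  move=> fnY; apply: iZ; apply: (finS _ (finU fYZ fnY)) => x Zx.
  by have [Yx|nYx] := pselect (Y x); [left|right].
exists Y; split => // C cC; split.
  have [f|nf] := pselect (finite_set (C `&` Y)); first by left.
  right; apply: contrapT => nf2.
  apply: (three_ends two (clopI cC cY') (clopD cY' cC) (clopC cY') nf nf2 inY).
  - by apply: (finS _ (@finite_set0 G)) => x [[Cx _] [_ nCx]].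
  - by apply: (finS _ (@finite_set0 G)) => x [[_ Yx] nYx].
  - by apply: (finS _ (@finite_set0 G)) => x [[Yx _] nYx].
have [f|nf] := pselect (finite_set (C `&` ~` Y)); first by left.
right; apply: contrapT => nf2.
apply: (three_ends two (clopI cC (clopC cY')) (clopD (clopC cY') cC) cY' nf nf2 iY).
- by apply: (finS _ (@finite_set0 G)) => x [[Cx _] [_ nCx]].
- by apply: (finS _ (@finite_set0 G)) => x [[_ Yx] nYx].
- by apply: (finS _ (@finite_set0 G)) => x [[Yx _] nYx].
Qed.

Lemma HypC A : Hyp A -> Hyp (~` A).
Proof.
move=> [cA iA inA p4]; split => //; first exact: clopC.
  by rewrite setCK.
move=> C cC; have [h1 h2] := p4 C cC; rewrite setCK; split => //.
Qed.

Lemma dichot A : Hyp A -> forall g, aeq (lt g A) A \/ aeq (lt g A) (~` A).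
Proof.
move=> [cA iA inA p4] g.
have cC := clop_lt g cA.
have iC := lt_inf (g:=g) iA.
have inC : ~ finite_set (~` lt g A) by rewrite -ltC; apply: lt_inf.
have [h1 h2] := p4 _ cC.
case: h1 => [f1|f2]; case: h2 => [f3|f4].
- exfalso; apply: iC; apply: (finS _ (finU f1 f3)) => x Cx.
  by have [Ax|nAx] := pselect (A x); [left|right].
- right; split => //.
  by apply: (finS _ f1) => x [Cx nnAx]; split => //; apply: contrapT.
- by left; split.
- exfalso; apply: inC; apply: (finS _ (finU f2 f4)) => x nCx.
  by have [Ax|nAx] := pselect (A x); [left|right].
Qed.

End HypS.

Section HS.
Variable G : group.
Local Notation "x \* y" := (@gmul G x y) (at level 40, left associativity).
Local Notation "x ^-" := (@ginv G x) (at level 3).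
Local Notation "\1" := (gone G).
Implicit Types A B C Y : set G.

Definition Hs A := [set g | aeq (lt g A) A].

Variable A : set G.
Hypothesis hA : Hyp A.

Lemma notHs g : ~ Hs A g -> aeq (lt g A) (~` A).
Proof. by case: (dichot hA g). Qed.

Lemma aeq_AC_false : ~ aeq A (~` A).
Proof.
by case: hA => _ iA _ _ [f1 _]; apply: iA; apply: (finS _ f1) => x Ax; split.
Qed.

Lemma Hs1 : Hs A \1.
Proof. by rewrite /Hs /= lt1; apply: aeq_refl. Qed.

Lemma HsM g h : Hs A g -> Hs A h -> Hs A (g \* h).
Proof.
move=> Hg Hh; rewrite /Hs /= ltM.
exact: aeq_trans (lt_aeq g Hh) Hg.
Qed.

Lemma HsV g : Hs A g -> Hs A g^-.
Proof.
move=> Hg; rewrite /Hs /=; apply: aeq_sym.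
have := lt_aeq g^- Hg; rewrite ltK => h; exact: aeq_sym (aeq_sym h).
Qed.

Lemma HsMnn g h : ~ Hs A g -> ~ Hs A h -> Hs A (g \* h).
Proof.
move=> Hg Hh; rewrite /Hs /= ltM.
apply: aeq_trans (lt_aeq g (notHs Hh)) _; rewrite ltC.
by have := aeqC (notHs Hg); rewrite setCK.
Qed.

Lemma HsMn g h : Hs A g -> ~ Hs A h -> ~ Hs A (g \* h).
Proof.
move=> Hg Hh Hgh; apply: Hh.
have -> : h = g^- \* (g \* h) by rewrite mulKg.
by apply: HsM => //; apply: HsV.
Qed.

Lemma HsnM g h : ~ Hs A g -> Hs A h -> ~ Hs A (g \* h).
Proof.
move=> Hg Hh Hgh; apply: Hg.
have -> : g = (g \* h) \* h^- by rewrite mulgK.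
by apply: HsM => //; apply: HsV.
Qed.

Lemma HsVn g : ~ Hs A g -> ~ Hs A g^-.
Proof. by move=> Hg /HsV; rewrite invgK. Qed.

Lemma HsC : Hs (~` A) = Hs A.
Proof.
apply/seteqP; split=> g; rewrite /Hs /= ltC => h.
  by have := aeqC h; rewrite !setCK.
exact: aeqC.
Qed.

Lemma lt_Hs g X : Hs A g -> aeq X A -> aeq (lt g X) A.
Proof. by move=> Hg XA; apply: aeq_trans (lt_aeq g XA) Hg. Qed.

Lemma lt_nHs g X : ~ Hs A g -> aeq X A -> aeq (lt g X) (~` A).
Proof. by move=> Hg XA; apply: aeq_trans (lt_aeq g XA) (notHs Hg). Qed.

Lemma Ginf : ~ finite_set [set: G].
Proof. by case: hA => _ iA _ _ f; apply: iA; apply: finS f. Qed.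

Lemma AH_inf : ~ finite_set (A `&` Hs A).
Proof.
case: hA => cA iA _ _.
have [allH|nall] := pselect (forall g, Hs A g).
  by move=> f; apply: iA; apply: finS f => x Ax; split; [exact: Ax|exact: allH].
have [c nHc] : exists c, ~ Hs A c.
  by apply: contrapT => h; apply: nall => g; apply: contrapT => ng; apply: h; exists g.
move=> fAH.
have fAnH : ~ finite_set (A `&` ~` Hs A).
  move=> f; apply: iA; apply: (finS _ (finU fAH f)) => x Ax.
  by have [Hx|nHx] := pselect (Hs A x); [left|right].
have i2 : ~ finite_set (rmul A c^- `&` Hs A).
  move=> f; apply: fAnH; apply: (finS _ (fin_img (fun y => y \* c^-) f)).
  move=> x [Ax nHx]; exists (x \* c); last by rewrite mulgK.
  by split; [rewrite /rmul /= mulgK|apply: HsMnn].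
apply: i2; apply: (finS _ (finU fAH (rmul_aeq c^- cA).1)) => x [Ax Hx].
by have [Ax'|nAx'] := pselect (A x); [left|right].
Qed.

Lemma Hinf : ~ finite_set (Hs A).
Proof. by move=> f; apply: AH_inf; apply: finS f => x []. Qed.

End HS.

Section Gen.
Variable G : group.
Local Notation "x \* y" := (@gmul G x y) (at level 40, left associativity).
Local Notation "x ^-" := (@ginv G x) (at level 3).
Local Notation "\1" := (gone G).

Lemma gen_sub (S T : set G) : S `<=` T -> forall x, generated S x -> generated T x.
Proof.
move=> ST x; elim => [y Sy| |y z _ gy _ gz|y _ gy].
- by apply: gen_base; apply: ST.
- exact: gen_one.
- exact: gen_mul.
- exact: gen_inv.
Qed.

Lemma gen_closed (S K : set G) : K \1 -> (forall x y, K x -> K y -> K (x \* y)) ->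
  (forall x, K x -> K x^-) -> S `<=` K -> forall x, generated S x -> K x.
Proof.
move=> K1 KM KV SK x; elim => [y Sy| |y z _ gy _ gz|y _ gy].
- exact: SK.
- exact: K1.
- exact: KM.
- exact: KV.
Qed.

End Gen.

Section Graph.
Variable G : group.
Local Notation "x \* y" := (@gmul G x y) (at level 40, left associativity).
Local Notation "x ^-" := (@ginv G x) (at level 3).
Local Notation "\1" := (gone G).
Implicit Types A B C Y K : set G.

Variable S : set G.
Hypothesis fS : finite_set S.
Hypothesis genS : forall x, generated S x.

Definition S' := S `|` (fun s => s^-) @` S.
Lemma fS' : finite_set S'.
Proof. by apply: finU => //; apply: fin_img. Qed.
Lemma S'V s : S' s -> S' s^-.
Proof.
case=> [Ss|[t St <-]]; first by right; exists s.
by left; rewrite invgK.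
Qed.

Lemma gen_close K : (forall x s, K x -> S' s -> K (x \* s)) ->
  forall w, generated S w -> forall x, K x -> K (x \* w) /\ K (x \* w^-).
Proof.
move=> cl w; elim => [s Ss| |a b _ ha _ hb|a _ ha] x Kx.
- by split; apply: cl => //; [left|right; exists s].
- by rewrite invg1 mulg1'.
- rewrite invgM !mulgA'; split.
    by apply: (hb _ (ha _ Kx).1).1.
  by apply: (ha _ (hb _ Kx).2).2.
- by rewrite invgK; have [h1 h2] := ha _ Kx.
Qed.

Lemma connG K x0 : (forall x s, K x -> S' s -> K (x \* s)) -> K x0 ->
  forall y, K y.
Proof.
move=> cl Kx0 y; have := (gen_close cl (genS (x0^- \* y)) Kx0).1.
by rewrite mulKVg.
Qed.

Lemma edge_ex K x0 y0 : K x0 -> ~ K y0 ->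
  exists x s, [/\ K x, S' s & ~ K (x \* s)].
Proof.
move=> Kx0 nKy0; apply: contrapT => h; apply: nKy0; apply: (connG (x0:=x0)) => //.
move=> x s Kx S's; apply: contrapT => nK; apply: h; by exists x, s.
Qed.

Lemma bdM a b K : bd (a \* b) K `<=` bd a K `|` (fun y => y \* a^-) @` bd b K.
Proof.
move=> x [Kx nK]; have [Kxa|nKxa] := pselect (K (x \* a)); last by left.
by right; exists (x \* a); [split=> //; rewrite -mulgA'|rewrite mulgK].
Qed.

Lemma clopS K : (forall s, S' s -> finite_set (bd s K)) -> clop K.
Proof.
move=> h t.
suff : finite_set (bd t K) /\ finite_set (bd t^- K) by case.
elim: (genS t) => [s Ss| |a b _ [ha ha'] _ [hb hb']|a _ [ha ha']].
- by split; apply: h; [left|right; exists s].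
- rewrite invg1; suff -> : bd \1 K = set0 by split; apply: finite_set0.
  by apply/seteqP; split => // x [Kx]; rewrite mulg1'.
- split.
    by apply: (finS (bdM (a:=a) (b:=b) (K:=K))); apply: finU => //; apply: fin_img.
  by rewrite invgM; apply: (finS (bdM (K:=K))); apply: finU => //; apply: fin_img.
- by rewrite invgK.
Qed.

Definition Q Y := [set p | exists2 s, S' s &
  (Y p /\ ~ Y (p \* s)) \/ (~ Y p /\ Y (p \* s))].

Lemma Q_fin Y : clop Y -> finite_set (Q Y).
Proof.
move=> cY.
apply: (finS _ (bigcup_finite (F := fun s => bd s Y `|` bd s (~` Y)) fS' _)).
  move=> p [s S's [h|[h1 h2]]]; exists s => //; first by left.
  by right; split.
by move=> s _; apply: finU; [exact: cY|exact: clopC].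
Qed.

Lemma Q_lt g Y p : Q (lt g Y) p -> exists2 q, Q Y q & p = g \* q.
Proof.
move=> [s S's h]; exists (g^- \* p); last by rewrite mulKVg.
by exists s => //; move: h; rewrite /lt /= -!mulgA'.
Qed.

Lemma Q_lt' g Y q : Q Y q -> Q (lt g Y) (g \* q).
Proof.
move=> [s S's h]; exists s => //; rewrite /lt /= -!mulgA' !mulKg.
exact: h.
Qed.

Definition dlt Y : set (G * G) := [set e | [/\ Y e.1, ~ Y e.2 &
  exists2 s, S' s & e.2 = e.1 \* s]].

Lemma dlt_fin Y : clop Y -> finite_set (dlt Y).
Proof.
move=> cY.
apply: (sub_finite_set _ (bigcup_finite (F := fun s => (fun x => (x, x \* s)) @` bd s Y) fS' _)).
  move=> [x y] [/= Yx nYy [s S's ey]]; exists s => //.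
  by exists x; [split => //; rewrite -ey|rewrite ey].
by move=> s _; apply: finite_image.
Qed.

Definition cd Y : nat := #|` fset_set (dlt Y : set {classic (G * G)}) |%fset.

Lemma cd_lt Y Z : clop Z -> (forall e, dlt Y e -> dlt Z e) ->
  (exists e, dlt Z e /\ ~ dlt Y e) -> (cd Y < cd Z)%N.
Proof.
move=> cZ sub [e [Ze nYe]].
have fZ := dlt_fin cZ.
have fY : finite_set (dlt Y) by apply: sub_finite_set fZ.
rewrite /cd; apply: fproper_ltn_card; rewrite fproperEneq.
apply/andP; split; last by rewrite -(@fset_set_sub {classic (G * G)}).
apply/eqP => eq; apply: nYe.
have : (e : {classic (G * G)}) \in fset_set (dlt Z : set {classic (G * G)}).
  by rewrite in_fset_set // inE.
by rewrite -eq in_fset_set // inE.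
Qed.

End Graph.

Section MinCut.
Variable G : group.
Local Notation "x \* y" := (@gmul G x y) (at level 40, left associativity).
Local Notation "x ^-" := (@ginv G x) (at level 3).
Local Notation "\1" := (gone G).
Implicit Types B C Y K : set G.

Variable A : set G.
Hypothesis hA : Hyp A.
Variable S : set G.
Hypothesis fS : finite_set S.
Hypothesis genS : forall x, generated S x.

Local Notation S' := (S' S).
Local Notation Q := (Q S).
Local Notation dlt := (dlt S).
Local Notation cd := (cd S).

Lemma exists_min : exists X, aeq X A /\ forall Y, aeq Y A -> (cd X <= cd Y)%N.
Proof.
pose P n := `[< exists Y, aeq Y A /\ cd Y = n >].
have ex : exists n, P n by exists (cd A); apply/asboolP; exists A; split => //; apply: aeq_refl.
case: (ex_minnP ex) => m /asboolP [X [XA eX]] minm.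
exists X; split => // Y YA; rewrite eX; apply: minm; apply/asboolP; by exists Y.
Qed.

Lemma infinite_ex (Z : set G) : ~ finite_set Z -> exists x, Z x.
Proof. exact: inf_ex. Qed.

Section WithX.
Variable X : set G.
Hypothesis XA : aeq X A.
Hypothesis Xmin : forall Y, aeq Y A -> (cd X <= cd Y)%N.

Let cA : clop A. Proof. by case: hA. Qed.
Let iA : ~ finite_set A. Proof. by case: hA. Qed.
Let inA : ~ finite_set (~` A). Proof. by case: hA. Qed.
Let p4 : P4cond A. Proof. by case: hA. Qed.
Let cX : clop X. Proof. exact: clop_aeq (aeq_sym XA) cA. Qed.
Let iX : ~ finite_set X. Proof. exact: aeq_inf (aeq_sym XA) iA. Qed.
Let inX : ~ finite_set (~` X). Proof. exact: aeq_inf (aeqC (aeq_sym XA)) inA. Qed.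

Lemma shrink K0 : K0 `<=` ~` X -> finite_set K0 -> (exists k, K0 k) ->
  (forall x s, K0 x -> S' s -> ~ X (x \* s) -> K0 (x \* s)) -> False.
Proof.
move=> sub fK [k0 Kk0] cl.
pose X' := X `|` K0.
have X'A : aeq X' A.
  case: XA => f1 f2; split.
    apply: (finS _ (finU f1 fK)) => x [[Xx|Kx] nAx]; [left|right] => //.
  by apply: (finS _ f2) => x [Ax nXpx]; split => //; move=> Xx; apply: nXpx; left.
have := Xmin X'A; apply/negP; rewrite -ltnNge.
apply: cd_lt => //.
  move=> [x y] [/= Xpx nXpy [s S's ey]].
  case: Xpx => [Xx|Kx].
    split => //; last by exists s.

    by move=> Xy; apply: nXpy; left.
  exfalso; apply: (nXpy); right; rewrite ey; apply: cl => //.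
  by move=> Xxs; apply: nXpy; left; rewrite ey.
have [y0 nKy0] : exists y, ~ K0 y.
  apply: contrapT => h; apply: (Ginf hA); apply: (finS _ fK) => y _.
  by apply: contrapT => nK; apply: h; exists y.
have [p [s [Kp S's nKps]]] := edge_ex genS Kk0 nKy0.
have Xps : X (p \* s).
  by apply: contrapT => nX; apply: nKps; apply: cl.
exists (p \* s, p); split.
  split => //=; first exact: sub.
  by exists s^-; [apply: S'V|rewrite mulgK].
by move=> [_ /= nX' _]; apply: nX'; right.
Qed.

Lemma part_fin K : K `<=` ~` X -> clop K ->
  finite_set K \/ finite_set (~` A `\` K).
Proof.
move=> sub cK; have [[f1|f2] [f3|f4]] := p4 cK.
- left; apply: (finS _ (finU f1 f3)) => x Kx.
  by have [Ax|nAx] := pselect (A x); [left|right].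
- by right.
- exfalso; apply: iA; case: XA => f5 f6.
  apply: (finS _ (finU f2 f6)) => x Ax.
  have [Kx|nKx] := pselect (K x); last by left.
  by right; split => //; apply: sub.
- by right.
Qed.

Lemma connC K : K `<=` ~` X ->
  (forall x s, K x -> S' s -> ~ X (x \* s) -> K (x \* s)) ->
  (forall y, ~ K y) \/ (forall y, ~ X y -> K y).
Proof.
move=> sub cl; apply: contrapT => /not_orP [h1 h2].
have [k Kk] : exists k, K k.
  by apply: contrapT => h; apply: h1 => y Ky; apply: h; exists y.
have [k' [nXk' nKk']] : exists k', ~ X k' /\ ~ K k'.
  apply: contrapT => h; apply: h2 => y nXy; apply: contrapT => nKy; apply: h.
  by exists y.
pose K' := ~` X `\` K.
have subK' : K' `<=` ~` X by move=> x [].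
have clK' : forall x s, K' x -> S' s -> ~ X (x \* s) -> K' (x \* s).
  move=> x s [nXx nKx] S's nXxs; split => // Kxs; apply: nKx.
  have := cl _ s^- Kxs (S'V S's); rewrite mulgK; apply => //.
have clopK : forall K0, K0 `<=` ~` X ->
    (forall x s, K0 x -> S' s -> ~ X (x \* s) -> K0 (x \* s)) -> clop K0.
  move=> K0 sub0 cl0; apply: (clopS genS) => s S's.
  apply: (finS _ (clopC cX s)) => x [K0x nK0xs]; split; first exact: sub0.
  by move=> nXxs; apply: nK0xs; apply: cl0.
have [fK|fK1] := part_fin sub (clopK _ sub cl).
  by apply: (shrink sub fK (ex_intro _ k Kk) cl).
have [fK'|fK2] := part_fin subK' (clopK _ subK' clK').
  by apply: (shrink subK' fK' (ex_intro _ k' (conj nXk' nKk')) clK').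
apply: inA; apply: (finS _ (finU fK1 fK2)) => x nAx.
by have [Kx|nKx] := pselect (K x); [right; split => //; move=> [_ ]|left].
Qed.

End WithX.
End MinCut.

Section Nest.
Variable G : group.
Local Notation "x \* y" := (@gmul G x y) (at level 40, left associativity).
Local Notation "x ^-" := (@ginv G x) (at level 3).
Local Notation "\1" := (gone G).
Implicit Types B C Y K : set G.

Variable A : set G.
Hypothesis hA : Hyp A.
Variable S : set G.
Hypothesis fS : finite_set S.
Hypothesis genS : forall x, generated S x.

Local Notation S' := (S' S).
Local Notation Q := (Q S).

Lemma nest : exists h X, [/\ Hs A h, aeq X A, clop X, lt h X `<=` X &
  exists d, X d /\ ~ lt h X d].
Proof.
have [cA iA inA p4] := hA.
have [X [XA Xmin]] := exists_min A S.
have cX : clop X := clop_aeq (aeq_sym XA) cA.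
have iX : ~ finite_set X := aeq_inf (aeq_sym XA) iA.
have inX : ~ finite_set (~` X) := aeq_inf (aeqC (aeq_sym XA)) inA.
have [x0 Xx0] := inf_ex iX.
have [y0 nXy0] := inf_ex inX.
have [q0 [s0 [Xq0 S's0 nXq0s0]]] := edge_ex genS Xx0 nXy0.
have Qq0 : Q X q0 by exists s0 => //; left.
have fQ := Q_fin fS cX.
pose Y := [set g | forall q, Q X q -> X (g \* q)].
have fAY : finite_set (A `\` Y).
  apply: (finS _ (finU XA.2 (bigcup_finite (F := fun q => bd q X) fQ (fun q _ => cX q)))).
  move=> g [Ag nYg].
  have [Xg|nXg] := pselect (X g); last by left.
  right; apply: contrapT => h; apply: nYg => q Qq; apply: contrapT => nXgq.
  by apply: h; exists q.
pose Bad := [set (a \* b^-) | a in Q X & b in Q X].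
have fBad : finite_set Bad by apply: finite_image2.
have iZ : ~ finite_set ((A `&` Hs A) `\` ((A `\` Y) `|` Bad)).
  by apply: inf_diff; [apply: AH_inf|apply: finU].
have [h [[Ah Hh] nh]] := inf_ex iZ.
have Yh : Y h by apply: contrapT => nYh; apply: nh; left.
have nBad : forall q, Q X q -> ~ Q X (h \* q).
  move=> q Qq Qhq; apply: nh; right; exists (h \* q) => //; exists q => //.
  by rewrite mulgK.
pose K := ~` X `&` lt h X.
have hXA : aeq (lt h X) A := lt_Hs Hh XA.
have clK : forall x s, K x -> S' s -> ~ X (x \* s) -> K (x \* s).
  move=> x s [nXx hXx] S's nXxs; split => //.
  apply: contrapT => nhxs; apply: nXx.
  have : Q (lt h X) x by exists s => //; left.
  move=> /Q_lt [q Qq ->].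
  by apply: Yh.
have [K0|Kall] := connC hA fS genS XA Xmin (K := K) (fun x (hx : K x) => hx.1) clK.
- exists h, X; split => //.
    by move=> x hXx; apply: contrapT => nXx; apply: (K0 x).
  apply: contrapT => nd.
  have eq : lt h X = X.
    apply/seteqP; split; first by move=> x hXx; apply: contrapT => nXx; apply: (K0 x).
    by move=> x Xx; apply: contrapT => nhx; apply: nd; exists x.
  by apply: (nBad q0 Qq0); rewrite -{1}eq; apply: Q_lt'.
- exfalso; apply: inA; apply: (finS _ (finU XA.1 hXA.1)) => x nAx.
  have [Xx|nXx] := pselect (X x); first by left; split.
  by right; split => //; apply: (Kall x nXx).2.
Qed.

End Nest.

Section Pow.
Variable G : group.
Local Notation "x \* y" := (@gmul G x y) (at level 40, left associativity).
Local Notation "x ^-" := (@ginv G x) (at level 3).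
Local Notation "\1" := (gone G).
Variable h : G.
Definition pw n : G := iter n (gmul h) \1.
Lemma pwS n : pw n.+1 = h \* pw n. Proof. by []. Qed.
Lemma pw0 : pw 0 = \1. Proof. by []. Qed.
Lemma pw_comm n : pw n \* h = h \* pw n.
Proof.
elim: n => [|n IH]; first by rewrite pw0 mul1g' mulg1'.
by rewrite pwS -mulgA' IH.
Qed.
Lemma pwD m n : pw (m + n) = pw m \* pw n.
Proof.
elim: m => [|m IH]; first by rewrite add0n pw0 mul1g'.
by rewrite addSn !pwS IH mulgA'.
Qed.
Lemma npw n : iter n (gmul h^-) \1 = (pw n)^-.
Proof.
elim: n => [|n IH]; first by rewrite invg1.
by rewrite iterS IH pwS invgM -invgM -invgM pw_comm.
Qed.
Lemma pw_cyc a b : cyclic_subgroup h ((pw a)^- \* pw b).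
Proof.
have [ab|ba] := leqP a b.
  exists (Posz (b - a)) => //=.
  by rewrite -{2}(subnKC ab) pwD mulKg.
exists (Negz (a - b).-1) => //=.
have e : a = b + (a - b).-1.+1 by rewrite prednK ?subn_gt0 // subnKC // ltnW.
rewrite -/(iter (a - b).-1.+1 (gmul h^-) \1) npw e pwD invgM -mulgA' mulVg' mulg1'.
by rewrite addKn.
Qed.
End Pow.

Lemma inj_fin (T : Type) (f : nat -> T) (W : set T) : injective f ->
  finite_set W -> ~ (forall n, W (f n)).
Proof.
move=> inj fW all; apply: infinite_nat.
have : finite_set (f @^-1` W) by apply: finite_preimage => // x y _ _; apply: inj.
by apply: sub_finite_set => n _; apply: all.
Qed.

Section Decomp.
Variable G : group.
Local Notation "x \* y" := (@gmul G x y) (at level 40, left associativity).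
Local Notation "x ^-" := (@ginv G x) (at level 3).
Local Notation "\1" := (gone G).
Variable S : set G.
Hypothesis fS : finite_set S.
Hypothesis genS : forall x, generated S x.
Local Notation S' := (S' S).
Local Notation Q := (Q S).

Lemma cross w : generated S w -> forall y, exists W : set G, finite_set W /\
  forall Y, (Y y /\ ~ Y (y \* w)) \/ (~ Y y /\ Y (y \* w)) -> exists2 p, W p & Q Y p.
Proof.
elim => [s Ss| |a b _ ha _ hb|a _ ha] y.
- exists [set y]; split => // Y hY; exists y => //; exists s => //; by left.
- exists set0; split; first exact: finite_set0.
  by move=> Y; rewrite mulg1' => -[[]|[]].
- have [W1 [f1 h1]] := ha y; have [W2 [f2 h2]] := hb (y \* a).
  exists (W1 `|` W2); split; first exact: finU.
  move=> Y hY; rewrite mulgA' in hY.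
  have [Ya|nYa] := pselect (Y (y \* a)).
  + have [Yy|nYy] := pselect (Y y).
    * have [p Wp Qp] := h2 Y (or_introl (conj Ya (proj2 (or_ind (fun x => x) (fun x => False_ind _ (proj1 x Yy)) hY)))).
      by exists p => //; right.
    * by have [p Wp Qp] := h1 Y (or_intror (conj nYy Ya)); exists p => //; left.
  + have [Yy|nYy] := pselect (Y y).
    * by have [p Wp Qp] := h1 Y (or_introl (conj Yy nYa)); exists p => //; left.
    * have Yyab : Y (y \* a \* b) by case: hY => -[].
      by have [p Wp Qp] := h2 Y (or_intror (conj nYa Yyab)); exists p => //; right.
- have [W [fW hW]] := ha (y \* a^-).
  exists W; split => // Y hY; apply: hW; rewrite mulgKV.
  by case: hY => -[h1 h2]; [right|left].
Qed.

Variable A : set G.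
Hypothesis hA : Hyp A.
Variables (h : G) (X : set G).
Hypotheses (Hh : Hs A h) (XA : aeq X A) (cX : clop X) (sub : lt h X `<=` X).
Hypothesis dd : exists d, X d /\ ~ lt h X d.

Let Xn n := lt (pw h n) X.
Lemma XnS n : Xn n.+1 = lt h (Xn n).
Proof. by rewrite /Xn pwS ltM. Qed.
Lemma XnS_sub n : Xn n.+1 `<=` Xn n.
Proof.
rewrite /Xn pwS -pw_comm ltM => x; rewrite /lt /= => hx.
exact: sub.
Qed.
Lemma Xn_sub m n : (m <= n)%N -> Xn n `<=` Xn m.
Proof.
elim: n => [|n IH]; first by rewrite leqn0 => /eqP ->.
rewrite leq_eqVlt => /orP [/eqP ->//|lt].
by move=> x /XnS_sub; apply: IH.
Qed.
Lemma Xn_X n : Xn n `<=` X.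
Proof. by have := Xn_sub (leq0n n); rewrite /Xn pw0 lt1. Qed.

Lemma ltE' g (B : set G) x : lt g B x = B (g^- \* x). Proof. by []. Qed.

Lemma pw_inj : injective (pw h).
Proof.
have [d [Xd nd]] := dd.
have key : forall n m, (n < m)%N -> pw h n <> pw h m.
  move=> n m lt e.
  have h1 : Xn m (pw h n \* d) by rewrite /Xn -e ltE' mulKg.
  have h2 := Xn_sub lt h1.
  rewrite /Xn pwS -pw_comm ltM ltE' mulKg in h2.
  exact: nd h2.
move=> n m e; apply/eqP; apply: contraT; rewrite neq_ltn => /orP [lt|lt].
  by case: (key _ _ lt e).
by case: (key _ _ lt (esym e)).
Qed.

Lemma cap_empty y : ~ (forall n, Xn n y).
Proof.
move=> all.
have [cA iA inA p4] := hA.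
have inX : ~ finite_set (~` X) := aeq_inf (aeqC (aeq_sym XA)) inA.
have [y0 nXy0] := inf_ex inX.
have [W [fW hW]] := cross (genS (y^- \* y0)) y.
have fQ := Q_fin fS cX.
apply: (inj_fin pw_inj (finite_image2 (fun a b => a \* b^-) fW fQ)) => n.
have [p Wp Qp] : exists2 p, W p & Q (Xn n) p.
  apply: hW; left; split; first exact: all.
  by rewrite mulKVg => /Xn_X.
have [q Qq ep] := Q_lt Qp.
by exists p => //; exists q => //; rewrite ep mulgK.
Qed.

Lemma cup_all y : exists n, X (pw h n \* y).
Proof.
apply: contrapT => nex.
have [cA iA inA p4] := hA.
have iX : ~ finite_set X := aeq_inf (aeq_sym XA) iA.
have [x0 Xx0] := inf_ex iX.
have [W [fW hW]] := cross (genS (x0^- \* y)) x0.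
have fQ := Q_fin fS cX.
have injV : injective (fun n => (pw h n)^-).
  by move=> m n e; apply: pw_inj; rewrite -[pw h m]invgK e invgK.
apply: (inj_fin injV (finite_image2 (fun a b => a \* b^-) fW fQ)) => n.
have [p Wp Qp] : exists2 p, W p & Q (lt (pw h n)^- X) p.
  apply: hW; left; split.
    rewrite ltE' invgK; apply: (@Xn_X n); by rewrite /Xn ltE' mulKg.
  by rewrite mulKVg ltE' invgK => Xy; apply: nex; exists n.
have [q Qq ep] := Q_lt Qp.
by exists p => //; exists q => //; rewrite ep mulgK.
Qed.

Lemma decomp y : exists a b dd, [/\ X dd, ~ lt h X dd &
  y = (pw h a)^- \* pw h b \* dd].
Proof.
have [n0 Xz] := cup_all y.
set z := pw h n0 \* y in Xz.
have ex : exists m, `[< ~ Xn m z >].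
  apply: contrapT => h0; apply: (cap_empty (y:=z)) => n.
  apply: contrapT => nX; apply: h0; exists n; exact/asboolP.
case: (ex_minnP ex) => m /asboolP nXm minm.
case: m nXm minm => [|m] nXm minm.
  by exfalso; apply: nXm; rewrite /Xn pw0 lt1.
have Xm : Xn m z.
  apply: contrapT => nX.
  by have := minm m (introT (asboolP _) nX); rewrite ltnn.
exists n0, m, ((pw h m)^- \* z); split.
- by move: Xm; rewrite /Xn ltE'.
- by move: nXm; rewrite /Xn pwS -pw_comm ltM !ltE'.
- by rewrite mulgA' mulgK /z mulKg.
Qed.

End Decomp.

Lemma caseF (G : group) (A : set G) (S : set G) : Hyp A -> finite_set S ->
  (forall x, generated S x) -> has_infinite_cyclic_finite_index G.
Proof.
move=> hA fS genS.
have [h [X [Hh XA cX sub dd]]] := nest hA fS genS.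
exists h; split.
  move=> fC; apply: (inj_fin (pw_inj sub dd) fC) => n.
  by exists (Posz n).
pose D := X `\` lt h X.
have fD : finite_set D.
  have hXA := lt_Hs Hh XA.
  apply: (finS _ (finU XA.1 hXA.2)) => x [Xx nx].
  by have [Ax|nAx] := pselect (A x); [right|left].
exists ((fun d => ginv d) @` D); split; first exact: finite_image.
move=> x.
have [a [b [d [Xd nd e]]]] := decomp fS genS hA XA cX sub dd (ginv x).
exists (ginv d); first by exists d.
exists (gmul (ginv (pw h b)) (pw h a)); first exact: pw_cyc.
by rewrite -(invgK x) e !invgM invgK !mulgA'.
Qed.

Section NF1.
Variable G : group.
Local Notation "x \* y" := (@gmul G x y) (at level 40, left associativity).
Local Notation "x ^-" := (@ginv G x) (at level 3).
Local Notation "\1" := (gone G).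
Implicit Types B C Y K : set G.

Definition Rb (T B : set G) := \bigcup_(s in S' T) bd s B.
Lemma Rb_fin T B : finite_set T -> clop B -> finite_set (Rb T B).
Proof. by move=> fT cB; apply: bigcup_finite; [apply: fS'|move=> s _; apply: cB]. Qed.

Lemma gen_S' T s c : generated T c -> S' T s -> generated T (c \* s).
Proof.
move=> gc [Ts|[t Tt <-]]; apply: gen_mul => //; first exact: gen_base.
by apply: gen_inv; apply: gen_base.
Qed.

Lemma imp T B x c1 c2 : generated T c1 -> generated T c2 -> B (x \* c1) ->
  ~ B (x \* c2) -> exists r c, [/\ Rb T B r, generated T c & r = x \* c].
Proof.
move=> g1 g2 B1 nB2; apply: contrapT => nex.
pose K := [set y | B y /\ exists2 c, generated T c & y = x \* c].
have cl : forall y s, K y -> S' T s -> K (y \* s).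
  move=> y s [By [c gc ey]] S's; split; last first.
    by exists (c \* s); [apply: gen_S'|rewrite ey mulgA'].
  apply: contrapT => nB; apply: nex; exists y, c; split => //.
  by exists s.
have gw : generated T (c1^- \* c2) by apply: gen_mul => //; apply: gen_inv.
have := (gen_close cl gw (conj B1 (ex_intro2 _ _ c1 g1 erefl))).1.
by rewrite mulgA' mulgK => -[].
Qed.

Variable A : set G.
Hypothesis hA : Hyp A.
Hypothesis nfg : ~ finitely_generated G.

Lemma pure_contra B T x0 : Hyp B -> Hs B = Hs A -> finite_set T -> T `<=` Hs A ->
  ~ finite_set (generated T) -> (forall c, generated T c -> B (x0 \* c)) -> False.
Proof.
move=> hB HB fT THs iC pure.
have CH : forall c, generated T c -> Hs A c.
  apply: gen_closed => //; [exact: Hs1 | exact: HsM | exact: HsV].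
pose A' := [set y | B (x0 \* y)].
have A'lt : A' = lt x0^- B by rewrite /lt /= invgK.
have [B' [hB' HB' A'B']] : exists B', [/\ Hyp B', Hs B' = Hs A & aeq A' B'].
  case: (dichot hB x0^-) => e; [exists B | exists (~` B)]; rewrite A'lt; split => //.
  - exact: HypC.
  - by rewrite HsC.
have [cB' iB' inB' _] := hB'.
have cA' : clop A' := clop_aeq (aeq_sym A'B') cB'.
pose H := Hs A.
have ltH : forall g, H g -> aeq (lt g A') A'.
  move=> g Hg; apply: aeq_trans (aeq_sym A'B'); apply: lt_Hs => //; by rewrite HB'.
have ltnH : forall g, ~ H g -> aeq (lt g A') (~` A').
  move=> g Hg; apply: aeq_trans (aeqC (aeq_sym A'B')); apply: lt_nHs => //.
  by rewrite HB'.
have CA' : forall c, generated T c -> A' c by move=> c /pure.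
pose R := Rb T A'.
have fR : finite_set R := Rb_fin fT cA'.
have ltV : forall r Z c, lt r^- Z c = Z (r \* c) by move=> r Z c; rewrite /lt /= invgK.
have f1 : finite_set (~` A' `&` H).
  pose P r := (fun c => r \* c) @` (generated T `&` lt r^- (~` A')).
  apply: (finS _ (bigcup_finite (F := P) (D := R `&` H) (finite_setIl _ fR) _)).
    move=> y [nA'y Hy].
    have [c [Cc lc]] : exists c, generated T c /\ lt y^- A' c.
      apply: contrapT => nex; apply: iC.
      apply: (finS _ (ltH _ (HsV Hy)).2) => c Cc; split; first exact: CA'.
      by move=> lc; apply: nex; exists c.
    rewrite ltV in lc.
    have [r [c' [Rr gc' er]]] := imp Cc (@gen_one G T) lc ltac:(by rewrite mulg1').
    exists r; first by split => //; rewrite er; apply: HsM => //; apply: CH.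
    exists (c'^-); last by rewrite er mulgK.
    split; first exact: gen_inv.
    by rewrite ltV er mulgK.
  move=> r [_ Hr]; apply: fin_img.
  apply: (finS _ (aeqC (ltH _ (HsV Hr))).1) => c [Cc lc]; split => //.
  by move=> /(_ (CA' _ Cc)).
have f2 : finite_set (A' `&` ~` H).
  pose P r := (fun c => r \* c) @` (generated T `&` lt r^- A').
  apply: (finS _ (bigcup_finite (F := P) (D := R `&` ~` H) (finite_setIl _ fR) _)).
    move=> y [A'y nHy].
    have [c [Cc lc]] : exists c, generated T c /\ ~ lt y^- A' c.
      apply: contrapT => nex; apply: iC.
      apply: (finS _ (ltnH _ (HsVn nHy)).1) => c Cc; split.
        by apply: contrapT => nl; apply: nex; exists c.
      by move=> /(_ (CA' _ Cc)).
    rewrite ltV in lc.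
    have A'y1 : A' (y \* \1) by rewrite mulg1'.
    have [r [c' [Rr gc' er]]] := imp (@gen_one G T) Cc A'y1 lc.
    exists r; first by split => //; rewrite er; apply: HsnM => //; apply: CH.
    exists (c'^-); last by rewrite er mulgK.
    split; first exact: gen_inv.
    by rewrite ltV er mulgK.
  move=> r [_ nHr]; apply: fin_img.
  apply: (finS _ (ltnH _ (HsVn nHr)).1) => c [Cc lc]; split => //.
  by move=> /(_ (CA' _ Cc)).
have aH : aeq A' H.
  split; first exact: f2.
  by apply: (finS _ f1) => x [Hx nAx]; split.
have cH : clop H := clop_aeq aH cA'.
have [allH|nall] := pselect (forall g, H g).
  by apply: inB'; apply: aeq_fin (aeqC A'B') _; apply: (finS _ f1) => x nx; split.
have [c0 nHc0] : exists c, ~ H c.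
  by apply: contrapT => h; apply: nall => g; apply: contrapT => ng; apply: h; exists g.
apply: (Hinf hA); apply: (finS _ (cH c0)) => g Hg; split => //.
exact: HsMn.
Qed.

Lemma fg_sub_fin T : finite_set T -> T `<=` Hs A -> finite_set (generated T).
Proof.
move=> fT THs; apply: contrapT => iC.
have [cA iA inA p4] := hA.
pose R := Rb T A.
have fR : finite_set R := Rb_fin fT cA.
have [allc|nall] := pselect (forall x, exists r c, [/\ R r, generated T c & r = x \* c]).
  apply: nfg; exists (R `|` T); split; first exact: finU.
  move=> x; have [r [c [Rr gc er]]] := allc x.
  have -> : x = r \* c^- by rewrite er mulgK.
  apply: gen_mul; first by apply: gen_base; left.
  by apply: gen_inv; apply: (gen_sub (S := T)) => // y Ty; right.
have [x0 nx0] : exists x0, ~ exists r c, [/\ R r, generated T c & r = x0 \* c].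
  by apply: contrapT => h; apply: nall => x; apply: contrapT => nx; apply: h; exists x.
have pureP : forall c, generated T c -> (A (x0 \* c) <-> A x0).
  move=> c gc; split => h.
    apply: contrapT => nA; apply: nx0.
    apply: (imp gc (@gen_one G T)) => //; by rewrite mulg1'.
  apply: contrapT => nA; apply: nx0.
  apply: (imp (@gen_one G T) gc) => //; by rewrite mulg1'.
have [Ax0|nAx0] := pselect (A x0).
  apply: (pure_contra (x0 := x0) hA erefl fT THs iC) => c gc.
  by apply/pureP.
apply: (pure_contra (x0 := x0) (HypC hA) (HsC A) fT THs iC) => c gc.
by move=> /(pureP _ gc).
Qed.

End NF1.

Lemma nat_bound (D : set nat) : finite_set D -> exists N, forall i, D i -> (i < N)%N.
Proof.
move=> /finite_seqP [s ->]; elim: s => [|a s [Nb hN]]; first by exists 0.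
exists (maxn a.+1 Nb) => i /=; rewrite inE => /orP [/eqP ->|si].
  by rewrite leq_max leqnn.
by rewrite leq_max (hN i si) orbT.
Qed.

Section Layers.
Variable G : group.
Local Notation "x \* y" := (@gmul G x y) (at level 40, left associativity).
Local Notation "x ^-" := (@ginv G x) (at level 3).
Local Notation "\1" := (gone G).
Implicit Types B C Y K : set G.

Definition AL B T := [set x | forall k, generated T k -> B (k \* x)].

Lemma AL_sub B T1 T2 : T1 `<=` T2 -> AL B T2 `<=` AL B T1.
Proof. by move=> sub x h k gk; apply: h; apply: gen_sub gk. Qed.

Lemma AL_B B T x : AL B T x -> B x.
Proof. by move=> /(_ _ (@gen_one G T)); rewrite mul1g'. Qed.

Lemma AL_inv B T k x : generated T k -> AL B T x -> AL B T (k \* x).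
Proof. by move=> gk h k' gk'; rewrite mulgA'; apply: h; apply: gen_mul. Qed.

Variable A : set G.
Hypothesis hA : Hyp A.
Hypothesis nfg : ~ finitely_generated G.

Lemma step_ex B T : Hyp B -> Hs B = Hs A -> finite_set T -> T `<=` Hs A ->
  exists k, Hs A k /\ exists x, AL B T x /\ ~ B (k \* x).
Proof.
move=> hB HB fT TH.
have [cB iB inB _] := hB.
have fL := fg_sub_fin hA nfg fT TH.
have LH : forall k, generated T k -> Hs A k.
  by apply: gen_closed => //; [exact: Hs1 | exact: HsM | exact: HsV].
have fD : finite_set (B `\` AL B T).
  apply: (finS _ (bigcup_finite (F := fun k => B `\` lt k^- B) fL _)).
    move=> x [Bx nAL]; apply: contrapT => nex; apply: nAL => k gk.
    apply: contrapT => nB; apply: nex; exists k => //; split => //.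
    by rewrite /lt /= invgK.
  move=> k gk; have Hk : Hs B k^- by rewrite HB; apply: HsV; apply: LH.
  exact: Hk.2.
have [x ALx] : exists x, AL B T x.
  apply: inf_ex => fAL; apply: iB; apply: (finS _ (finU fD fAL)) => x Bx.
  by have [h|h] := pselect (AL B T x); [right|left].
have iK : ~ finite_set ((~` B `&` Hs A) `\` (~` B `\` rmul (~` B) x)).
  apply: inf_diff; last exact: (rmul_aeq x (clopC cB)).2.
  by rewrite -HB -(HsC B); apply: AH_inf; apply: HypC.
have [k [[nBk Hk] nk]] := inf_ex iK.
exists k; split => //; exists x; split => //.
by apply: contrapT => nn; apply: nk; split.
Qed.

Definition chooseG (P : set G) : G :=
  match pselect (exists k, P k) with left h => proj1_sig (cid h) | right _ => \1 end.
Lemma chooseP (P : set G) : (exists k, P k) -> P (chooseG P).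
Proof. by move=> ex; rewrite /chooseG; case: pselect => // h; case: cid. Qed.

Definition Bn (n : nat) : set G := if (n %% 2 == 1)%N then ~` A else A.
Definition Pk n T := [set k | Hs A k /\ exists x, AL (Bn n) T x /\ ~ Bn n (k \* x)].
Fixpoint Tseq (n : nat) : set G :=
  match n with 0 => set0 | n'.+1 => Tseq n' `|` [set chooseG (Pk n' (Tseq n'))] end.

Lemma hBn n : Hyp (Bn n) /\ Hs (Bn n) = Hs A.
Proof. by rewrite /Bn; case: ifP => _; [split; [apply: HypC|apply: HsC]|]. Qed.

Lemma Tseq_ok n : finite_set (Tseq n) /\ Tseq n `<=` Hs A.
Proof.
elim: n => [|n [fT TH]] /=; first by split; [apply: finite_set0|].
have [hB HB] := hBn n.
have := chooseP (step_ex hB HB fT TH) => -[Hk _].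
by split; [apply: finU|move=> x [/TH|->]].
Qed.

Lemma Tseq_mono m n : (m <= n)%N -> Tseq m `<=` Tseq n.
Proof.
elim: n => [|n IH]; first by rewrite leqn0 => /eqP ->.
rewrite leq_eqVlt => /orP [/eqP ->//|lt] x /IH h; by left; apply: h.
Qed.

Local Notation L n := (generated (Tseq n)).
Local Notation Linf := [set k | exists n, L n k].

Lemma L_fin n : finite_set (L n).
Proof. by have [f s] := Tseq_ok n; apply: (fg_sub_fin hA nfg f s). Qed.

Lemma layer_ne n : exists x, AL (Bn n) (Tseq n) x /\ ~ AL (Bn n) (Tseq n.+1) x.
Proof.
have [hB HB] := hBn n; have [fT TH] := Tseq_ok n.
have [_ [x [ALx nB]]] := chooseP (step_ex hB HB fT TH).
exists x; split => // h; apply: nB; apply: h; apply: gen_base; by right.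
Qed.

Section OneB.
Variable B : set G.
Hypothesis hB : Hyp B.
Variable r : nat.
Hypothesis ne : forall n, (n %% 2 = r)%N -> exists x, AL B (Tseq n) x /\ ~ AL B (Tseq n.+1) x.
Hypothesis r2 : (r < 2)%N.
Hypothesis typ : finite_set (B `&` Linf) \/ ~ finite_set (Linf `\` B).

Local Notation AL' n := (AL B (Tseq n)).
Definition layer n := AL' n `\` AL' n.+1.

Lemma AL_mono m n : (m <= n)%N -> AL' n `<=` AL' m.
Proof. by move=> mn; apply: AL_sub; apply: Tseq_mono. Qed.

Lemma layer_uniq i j x : layer i x -> layer j x -> i = j.
Proof.
move=> [ai ni] [aj nj]; apply/eqP; rewrite eqn_leq; apply/andP; split.
  by apply: contraT; rewrite -ltnNge => lt; case: nj; apply: (AL_mono lt) ai.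
by apply: contraT; rewrite -ltnNge => lt; case: ni; apply: (AL_mono lt) aj.
Qed.

Lemma layer_idx_fin x : finite_set [set j | layer j x].
Proof.
have [[j lj]|nex] := pselect (exists j, layer j x).
  apply: (sub_finite_set _ (finite_set1 j)) => i li /=.
  exact: layer_uniq li lj.
apply: (sub_finite_set _ (@finite_set0 nat)) => i li; apply: nex; by exists i.
Qed.

Lemma layer_inv j k x : generated (Tseq j) k -> layer j x -> layer j (k \* x).
Proof.
move=> gk [a n]; split; first exact: AL_inv.
move=> a'; apply: n => k' gk'.
have := a' (k' \* k^-) _; rewrite -mulgA' mulKg; apply.
apply: gen_mul => //; apply: gen_inv; apply: (gen_sub (S := Tseq j)) => //.
by apply: Tseq_mono.
Qed.

Definition Fin1 s := [set y | exists j, layer j y /\ ~ AL' j (y \* s)].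

Lemma Fin1_fin s : finite_set (Fin1 s).
Proof.
have [cB _ _ _] := hB.
pose F p := \bigcup_(j in [set j | layer j p]) ((fun k => k \* p) @` L j).
apply: (finS _ (bigcup_finite (F := F) (cB s) _)).
  move=> y [j [lj nAL]].
  have [k gk nBk] : exists2 k, L j k & ~ B (k \* (y \* s)).
    by apply: contrapT => h; apply: nAL => k gk; apply: contrapT => nb; apply: h; exists k.
  exists (k \* y).
    split; first by apply: (lj.1 k gk).
    by rewrite -mulgA'.
  exists j; first exact: layer_inv.
  by exists (k^-); [apply: gen_inv|rewrite mulKg].
move=> p _; apply: bigcup_finite; first exact: layer_idx_fin.
by move=> j _; apply: fin_img; apply: L_fin.
Qed.

Definition ALinf := [set x | forall n, AL' n x].

Definition Fin3 t := [set x | B x /\ exists q k, [/\ bd t^- B q, ALinf q, Linf k &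
  x = k \* (q \* t^-)]].

Lemma Linf_mul k1 k2 : Linf k1 -> Linf k2 -> exists n, L n k1 /\ L n k2.
Proof.
move=> [n1 g1] [n2 g2]; exists (maxn n1 n2); split.
  by apply: (gen_sub (S := Tseq n1)) => //; apply: Tseq_mono; rewrite leq_maxl.
by apply: (gen_sub (S := Tseq n2)) => //; apply: Tseq_mono; rewrite leq_maxr.
Qed.

Lemma Fin3_fin t : finite_set (Fin3 t).
Proof.
have [cB _ _ _] := hB.
case: typ => [fBL|iLB].
  pose F q := (fun k => k \* (q \* t^-)) @` (Linf `&` rmul B (q \* t^-)).
  apply: (finS _ (bigcup_finite (F := F) (cB t^-) _)).
    move=> x [Bx [q [k [bq _ Lk ex]]]]; exists q => //.
    by exists k => //; split => //; rewrite /rmul /= -ex.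
  move=> q _; apply: fin_img.
  apply: (finS _ (finU fBL (rmul_aeq (q \* t^-) cB).1)) => k [Lk Bk].
  by have [b|b] := pselect (B k); [left|right].
apply: (finS _ (@finite_set0 G)) => x [_ [q [k [_ ALq _ _]]]].
apply: iLB; apply: (finS _ (rmul_aeq q cB).1) => k' [[n gk'] nB]; split => //.
exact: ALq n k' gk'.
Qed.

Definition Iset (i : nat) := (2 <= i %% 4)%N.
Definition Cset := [set x | exists2 i, Iset i & layer i x].

Lemma Cset_clop : clop Cset.
Proof.
move=> t.
apply: (finS _ (finU (finU (Fin1_fin t) (fin_img (fun y => y \* t^-) (Fin1_fin t^-))) (Fin3_fin t))).
move=> x [[i Ii [ALi nALi]] nC].
have [ALit|nALit] := pselect (AL' i (x \* t)); last by left; left; exists i.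
have ALi1 : AL' i.+1 (x \* t).
  by apply: contrapT => nA; apply: nC; exists i => //; split.
have [ALinf|nALinf] := pselect (ALinf (x \* t)).
  right.
  have [k gk nBk] : exists2 k, L i.+1 k & ~ B (k \* x).
    by apply: contrapT => h; apply: nALi => k gk; apply: contrapT => nb; apply: h; exists k.
  split; first exact: AL_B ALi.
  exists (k \* (x \* t)), (k^-); split.
  - split; first exact: ALi1.
    by rewrite !mulgA' mulgK.
  - move=> n k' gk'; have [m [g1 g2]] := Linf_mul (ex_intro _ n gk') (ex_intro _ i.+1 gk).
    rewrite mulgA'; apply: (ALinf m); apply: gen_mul => //.
  - by exists i.+1; apply: gen_inv.
  - by rewrite mulgA' mulKg mulgK.
left; right.
have ex : exists n, `[< ~ AL' n (x \* t) >].
  apply: contrapT => h; apply: nALinf => n; apply: contrapT => nA; apply: h.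
  by exists n; apply/asboolP.
case: (ex_minnP ex) => m /asboolP nAm minm.
have ltm : (i.+1 < m)%N.
  by rewrite ltnNge; apply/negP => lem; apply: (nAm); move: ALi1; apply: AL_mono.
case: m nAm minm ltm => // j nAj minj ltm.
have ALj : AL' j (x \* t).
  apply: contrapT => nA.
  by have := minj j (introT (asboolP _) nA); rewrite ltnn.
exists (x \* t); last by rewrite mulgK.
exists j; split; first by split.
rewrite mulgK => ALjx; apply: nALi; apply: AL_mono ALjx; by [].
Qed.

Lemma union_inf (J : nat -> Prop) : (forall N, exists2 i, (N <= i)%N & J i /\ exists x, layer i x) ->
  ~ finite_set [set x | exists2 i, J i & layer i x].
Proof.
move=> cof fU.
have fIdx : finite_set [set i | exists x, [set x | exists2 i, J i & layer i x] x /\ layer i x].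
  apply: (sub_finite_set _ (bigcup_finite (F := fun x => [set j | layer j x]) fU _)).
    by move=> i [x [Ux lx]]; exists x.
  by move=> x _; apply: layer_idx_fin.
have [N hN] := nat_bound fIdx.
have [i Ni [Ji [x lx]]] := cof N.
have := hN i (ex_intro _ x (conj (ex_intro2 _ _ i Ji lx) lx)).
by rewrite ltnNge Ni.
Qed.

Lemma layers_contra : False.
Proof.
have [cB iB inB p4] := hB.
have CB : Cset `<=` B by move=> x [i _ [a _]]; apply: AL_B a.
have iC : ~ finite_set Cset.
  apply: union_inf => N.
  have [x hx] := ne (n := 4 * N + 2 + r) ltac:(lia).
  by exists (4 * N + 2 + r)%N; [lia|split; [rewrite /Iset; lia|exists x]].
have iD : ~ finite_set (B `\` Cset).
  move=> f; apply: (union_inf (J := fun i => ~ Iset i)).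
    move=> N; have [x hx] := ne (n := 4 * N + r) ltac:(lia).
    by exists (4 * N + r)%N; [lia|split; [rewrite /Iset; lia|exists x]].
  apply: (finS _ f) => x [i nIi li]; split; first by apply: AL_B li.1.
  move=> [j Ij lj]; apply: nIi; by rewrite (layer_uniq li lj).
have [[f|f] _] := p4 _ Cset_clop.
  by apply: iC; apply: (finS _ f) => x Cx; split => //; apply: CB.
by apply: iD.
Qed.

End OneB.

Lemma NF_false : False.
Proof.
have [iLA|fLA] := pselect (~ finite_set (Linf `\` A)).
  apply: (layers_contra (B := A) (r := 0) hA).
  - by move=> n hn; have := layer_ne n; rewrite /Bn hn.
  - by [].
  - by right.
have hnA := HypC hA.
apply: (layers_contra (B := ~` A) (r := 1) hnA).
- by move=> n hn; have := layer_ne n; rewrite /Bn hn.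
- by [].
- left; apply: (finS _ (contrapT fLA)) => x [nAx Lx]; by split.
Qed.

End Layers.

Theorem theorem9p16 (G : group) :
  has_exactly_two_ends G ->
  finitely_generated G /\ has_infinite_cyclic_finite_index G.
Proof.
move=> two; have [A hA] := two_ends_Hyp two.
have [fg|nfg] := pselect (finitely_generated G).
  split => //; have [S [fS genS]] := fg; exact: caseF hA fS genS.
by exfalso; exact: NF_false hA nfg.
Qed.
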